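(* Let $n\ge4$, let $C=\mathrm{circ}(1,0,\ldots,0,-1)$ of order $n-1$, and let $X=(CC^T+I_{n-1})^{-1}(J_{n-1}-nI_{n-1})$. Then $X=\mathrm{circ}(b_0,b_1,\ldots,b_{n-2})$ where, for $j=0,1,\ldots,n-2$, \[b_j=1+\frac{n2^{n-1-j}}{\sqrt{5}}\left[\frac{(3+\sqrt{5})^j}{2^{n-1}-(3+\sqrt{5})^{n-1}}-\frac{(3-\sqrt{5})^j}{2^{n-1}-(3-\sqrt{5})^{n-1}}\right].\]
   Context: For $c_0,\dots,c_{k-1}$, $\mathrm{circ}(c_0,\ldots,c_{k-1})$ denotes the $k\times k$ circulant matrix whose $(i,j)$-entry is $c_{(j-i)\bmod k}$. $J_{n-1}$ is the $(n-1)\times(n-1)$ all-ones matrix and $I_{n-1}$ the identity. Note $CC^T+I_{n-1}=\mathrm{circ}(3,-1,0,\ldots,0,-1)$, which is invertible. ($X$ is a block of the Moore–Penrose inverse of the oriented incidence matrix of the wheel graph $W_n$.) *)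

(* Defs.v *)
From mathcomp Require Import all_boot all_order all_algebra.
Set Implicit Arguments. Unset Strict Implicit. Unset Printing Implicit Defensive.
Import GRing.Theory Num.Theory.
Local Open Scope ring_scope.

Definition circ (R : Type) (k : nat) (c : nat -> R) : 'M[R]_k :=
  \matrix_(i < k, j < k) c ((j + k - i) %% k)%N.

(* Main.v *)
Require Import Defs.
From mathcomp Require Import all_boot all_order all_algebra.
From mathcomp Require Import zify ring lra.
Import GRing.Theory Num.Theory.
Local Open Scope ring_scope.

Lemma modnP (k x : nat) : (x < 2 * k)%N -> ((x < k)%N /\ (x %% k = x)%N) \/ ((k <= x)%N /\ (x %% k = x - k)%N).
Proof.
case: (ltnP x k) => h1 h2; first by left; rewrite modn_small.
right; split => //. have -> : x = ((x - k) + k)%N by rewrite subnK.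
by rewrite modnDr modn_small ?addnK //; lia.
Qed.

Ltac kill_mod k := repeat match goal with |- context [(?x %% k)%N] =>
  lazymatch x with context [(_ %% k)%N] => fail | _ =>
   let h := fresh "h" in have h := @modnP k x ltac:(lia); move: h;
   generalize (x %% k)%N; intros ? ? end end.

Section Mat.
Variables (R : rcfType) (k : nat).
Hypothesis hk : (2 < k)%N.

Definition Q : 'M[R]_k := \matrix_(i, j) ((j == ord_pred i)%:R).
Definition c0 : nat -> R := fun j => if j == 0%N then 1 else if j == (k - 1)%N then -1 else 0.

Lemma ordeqE n (i j : 'I_n) : (i == j) = (nat_of_ord i == nat_of_ord j).
Proof. by []. Qed.

Lemma sum_delta (x : 'I_k) (F : 'I_k -> R) : \sum_l (l == x)%:R * F l = F x.
Proof.
rewrite (bigD1 x) //= eqxx mul1r big1 ?addr0 // => l /negbTE ->; by rewrite mul0r.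
Qed.

Lemma C_eq : circ k c0 = 1%:M - Q.
Proof.
apply/matrixP => i j; rewrite !mxE /c0 !ordeqE /=.
have hi := ltn_ord i; have hj := ltn_ord j.
have e1 : (((j + k - i) %% k)%N == 0%N) = (nat_of_ord i == nat_of_ord j).
  apply/eqP/eqP; kill_mod k; lia.
have e2 : (((j + k - i) %% k)%N == (k-1)%N) = (nat_of_ord j == ((i + k).-1 %% k)%N).
  apply/eqP/eqP; kill_mod k; lia.
rewrite e1 e2.
case: eqP => h1; case: eqP => h2 //=; try (move=> *; exfalso; kill_mod k; lia).
all: move=> *; rewrite ?subr0 ?sub0r //.
Qed.


Lemma QQt : Q *m Q^T = 1%:M.
Proof.
apply/matrixP => i j; rewrite !mxE.
under eq_bigr => l _ do rewrite !mxE.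
rewrite sum_delta (inj_eq (@ord_pred_inj k)) eq_sym //.
Qed.

Lemma A_eq : circ k c0 *m (circ k c0)^T + 1%:M = 3%:R%:M - Q - Q^T.
Proof.
rewrite C_eq linearB /= trmx1 mulmxBl !mulmxBr !mul1mx !mulmx1 QQt.
apply/matrixP => i j; rewrite !mxE; case: (i == j); rewrite ?mulr1n ?mulr0n; ring.
Qed.

Lemma QG (F : 'M[R]_k) : Q *m F = \matrix_(i, j) F (ord_pred i) j.
Proof.
apply/matrixP => i j; rewrite !mxE.
under eq_bigr => l _ do rewrite !mxE.
by rewrite sum_delta.
Qed.

Lemma QtG (F : 'M[R]_k) : Q^T *m F = \matrix_(i, j) F (ordS i) j.
Proof.
apply/matrixP => i j; rewrite !mxE.
under eq_bigr => l _ do rewrite !mxE.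
have e : forall l : 'I_k, (i == ord_pred l) = (l == ordS i).
  move=> l; rewrite -{1}(ordSK i) (inj_eq (@ord_pred_inj k)) eq_sym //.
under eq_bigr => l _ do rewrite e.
by rewrite sum_delta.
Qed.

Lemma AJ : (3%:R%:M - Q - Q^T) *m const_mx 1 = const_mx 1 :> 'M[R]_k.
Proof.
rewrite !mulmxBl QG QtG mul_scalar_mx.
apply/matrixP => i j; rewrite !mxE; case: (i == j); rewrite ?mulr1n ?mulr0n; ring.
Qed.

End Mat.

Section Scal.
Variables (R : rcfType) (k : nat).
Hypothesis hk : (2 < k)%N.

Definition s5 : R := Num.sqrt 5.
Definition r1 : R := (3 + s5) / 2.
Definition r2 : R := (3 - s5) / 2.
Definition g (d : nat) : R := (r2 ^+ d / (1 - r2 ^+ k) - r1 ^+ d / (1 - r1 ^+ k)) / s5.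

Lemma s2 : s5 ^+ 2 = 5.
Proof. by rewrite /s5 sqr_sqrtr // ler0n. Qed.
Lemma s_gt0 : 0 < s5.
Proof. by rewrite /s5 sqrtr_gt0 ltr0n. Qed.
Lemma s_lt3 : s5 < 3.
Proof. have := s2; have := s_gt0; nra. Qed.
Lemma s_gt1 : 1 < s5.
Proof. have := s2; have := s_gt0; nra. Qed.
Lemma s_neq0 : s5 != 0.
Proof. by rewrite lt0r_neq0 ?s_gt0. Qed.
Lemma r12 : r1 * r2 = 1.
Proof. have := s2; rewrite /r1 /r2; nra. Qed.
Lemma sum3 : r1 + r2 = 3.
Proof. rewrite /r1 /r2; lra. Qed.
Lemma dif : r1 - r2 = s5.
Proof. rewrite /r1 /r2; lra. Qed.
Lemma rr1 : r1 ^+ 2 = 3 * r1 - 1.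
Proof. have := s2; rewrite /r1; nra. Qed.
Lemma rr2 : r2 ^+ 2 = 3 * r2 - 1.
Proof. have := s2; rewrite /r2; nra. Qed.
Lemma r1k : 1 - r1 ^+ k != 0.
Proof.
have h : 1 < r1 by have := s_gt0; rewrite /r1; lra.
have := exprn_egt1 k h; rewrite (_ : k != 0%N); last by lia.
move=> h2; apply/eqP => h3; move: h2; lra.
Qed.
Lemma r2k : 1 - r2 ^+ k != 0.
Proof.
have h : 0 <= r2 by have := s_lt3; rewrite /r2; lra.
have h' : r2 < 1 by have := s_gt1; rewrite /r2; lra.
have := exprn_ilt1 k h h'; rewrite (_ : k != 0%N); last by lia.
move=> h2; apply/eqP => h3; move: h2; lra.
Qed.

Lemma ginner e : 3 * g e.+1 - g e.+2 - g e = 0.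
Proof.
transitivity ((r2^+e * (3*r2 - r2^+2 - 1) / (1 - r2^+k) - r1^+e * (3*r1 - r1^+2 - 1)/(1-r1^+k))/s5).
  by rewrite /g !exprS; ring.
rewrite rr1 rr2; ring.
Qed.

Lemma gk0 : g k = g 0.
Proof.
apply/eqP; rewrite -subr_eq0; apply/eqP.
transitivity (((r2^+k - 1)/(1-r2^+k) - (r1^+k - 1)/(1-r1^+k))/s5).
  by rewrite /g !expr0; ring.
rewrite -(opprB 1 (r2 ^+ k)) -(opprB 1 (r1 ^+ k)) !mulNr !divff ?r1k ?r2k //.
by rewrite subrr mul0r.
Qed.


Lemma g0case : 3 * g 0 - g 1 - g k.-1 = 1.
Proof.
set m := k.-1.
have ek : k = m.+1 by rewrite /m; lia.
have e1 : r1 ^+ k = r1 ^+ m * r1 by rewrite ek exprSr.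
have e2 : r2 ^+ k = r2 ^+ m * r2 by rewrite ek exprSr.
have n1 := r1k; have n2 := r2k; rewrite e1 in n1; rewrite e2 in n2.
rewrite /g e1 e2 expr0 expr1.
transitivity (((r1 - r2^+m)/(1 - r2^+m*r2) - (r2 - r1^+m)/(1 - r1^+m*r1))/s5).
  by rewrite -sum3; ring.
have f1 : r1 - r2^+m = r1 * (1 - r2^+m*r2) by rewrite mulrBr mulr1 mulrCA r12 mulr1.
have f2 : r2 - r1^+m = r2 * (1 - r1^+m*r1) by rewrite mulrBr mulr1 mulrCA (mulrC r2) r12 mulr1.
rewrite f1 f2 !mulfK // dif divff // s_neq0 //.
Qed.

Lemma grec d : (d < k)%N -> 3 * g d - g (d.+1 %% k) - g ((d + k - 1) %% k) = (d == 0%N)%:R.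
Proof.
case: d => [|e] hd.
  rewrite (_ : (1 %% k = 1)%N); last by kill_mod k; lia.
  rewrite (_ : ((0 + k - 1) %% k = k.-1)%N); last by kill_mod k; lia.
  by rewrite g0case.
rewrite /=.
case: (boolP (e.+2 == k)) => /eqP ek.
  rewrite (_ : (e.+2 %% k = 0)%N); last by kill_mod k; lia.
  rewrite (_ : ((e.+1 + k - 1) %% k = e)%N); last by kill_mod k; lia.
  by rewrite -gk0 -ek ginner.
rewrite (_ : (e.+2 %% k = e.+2)%N); last by kill_mod k; lia.
rewrite (_ : ((e.+1 + k - 1) %% k = e)%N); last by kill_mod k; lia.
by rewrite ginner.
Qed.

Lemma conv (r : R) d : 1 - r ^+ k != 0 -> (d <= k)%N ->
  2 ^+ (k - d) * (2 * r) ^+ d / (2 ^+ k - (2 * r) ^+ k) = r ^+ d / (1 - r ^+ k).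
Proof.
move=> hr hd; rewrite !exprMn.
have e : (2:R) ^+ k = 2 ^+ (k - d) * 2 ^+ d by rewrite -exprD subnK.
rewrite e.
have n1 : (2:R) ^+ (k - d) != 0 by rewrite expf_neq0 // pnatr_eq0.
have n2 : (2:R) ^+ d != 0 by rewrite expf_neq0 // pnatr_eq0.
have -> : 2 ^+ (k - d) * 2 ^+ d - 2 ^+ (k - d) * 2 ^+ d * r ^+ k = 2 ^+ (k - d) * 2 ^+ d * (1 - r ^+ k) :> R by ring.
field; rewrite ?n1 ?n2 ?hr //.
Qed.

Lemma bg (n d : nat) : (d <= k)%N ->
  1 + n%:R * 2 ^+ (k - d) / Num.sqrt 5 *
          ((3 + Num.sqrt 5) ^+ d / (2 ^+ k - (3 + Num.sqrt 5) ^+ k)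
           - (3 - Num.sqrt 5) ^+ d / (2 ^+ k - (3 - Num.sqrt 5) ^+ k)) = 1 - n%:R * g d.
Proof.
move=> hd.
rewrite -[Num.sqrt 5]/s5.
have e1 : 3 + s5 = 2 * r1 by rewrite /r1 mulrC divfK // pnatr_eq0.
have e2 : 3 - s5 = 2 * r2 by rewrite /r2 mulrC divfK // pnatr_eq0.
rewrite e1 e2.
transitivity (1 + n%:R / s5 * (2 ^+ (k - d) * (2 * r1) ^+ d / (2 ^+ k - (2 * r1) ^+ k) - 2 ^+ (k - d) * (2 * r2) ^+ d / (2 ^+ k - (2 * r2) ^+ k))).
  by ring.
rewrite !conv ?r1k ?r2k // /g; ring.
Qed.

End Scal.

Lemma AG (R : rcfType) k (hk : (2 < k)%N) :
  (3%:R%:M - Q R k - (Q R k)^T) *m circ k (g R k) = 1%:M.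
Proof.
rewrite !mulmxBl QG QtG mul_scalar_mx.
apply/matrixP => i j; rewrite !mxE /= ordeqE.
have hi := ltn_ord i; have hj := ltn_ord j.
rewrite (_ : ((j + k - (i+k).-1 %% k) %% k = ((j+k-i)%%k).+1 %% k)%N); last by kill_mod k; lia.
rewrite (_ : ((j + k - i.+1 %% k) %% k = ((j+k-i)%%k + k - 1) %% k)%N); last by kill_mod k; lia.
rewrite (_ : (nat_of_ord i == nat_of_ord j) = (((j+k-i)%%k)%N == 0%N)); last by apply/eqP/eqP; kill_mod k; lia.
apply: grec => //; rewrite ltn_pmod //; lia.
Qed.

Theorem mainTheorem8 (R : rcfType) (n : nat) (hn : (4 <= n)%N) :
  let C : 'M[R]_(n.-1) :=
    circ n.-1 (fun j => if j == 0%N then 1 else if j == (n - 2)%N then -1 else 0) in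
  let X : 'M[R]_(n.-1) :=
    invmx (C *m C^T + 1%:M) *m (const_mx 1 - n%:R%:M) in
  let s5 : R := Num.sqrt 5 in
  X = circ n.-1 (fun j =>
        1 + n%:R * 2 ^+ (n.-1 - j) / s5 *
          ((3 + s5) ^+ j / (2 ^+ n.-1 - (3 + s5) ^+ n.-1)
           - (3 - s5) ^+ j / (2 ^+ n.-1 - (3 - s5) ^+ n.-1))).
Proof.
move=> C X s; rewrite {}/X {}/C {}/s.
have hk : (2 < n.-1)%N by lia.
have en : (n - 2 = n.-1 - 1)%N by lia.
rewrite en.
set k := n.-1.
have -> : circ k (fun j => if j == 0%N then (1:R) else if j == (k-1)%N then -1 else 0) = circ k (c0 R k) by [].
rewrite A_eq.
have AG' := @AG R k hk.
have [Au _] := mulmx1_unit AG'.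
have iA : invmx (3%:R%:M - Q R k - (Q R k)^T) = circ k (g R k).
  by rewrite -[invmx _]mulmx1 -AG' mulmxA mulVmx // mul1mx.
rewrite iA mulmxBr mul_mx_scalar.
have GJ : circ k (g R k) *m const_mx 1 = const_mx 1 :> 'M[R]_k.
  by rewrite -{1}(AJ R k) mulmxA (mulmx1C AG') mul1mx.
rewrite GJ; apply/matrixP => i j; rewrite !mxE.
rewrite bg //; last by apply: ltnW; rewrite ltn_pmod //; lia.
exact: hk.
Qed.
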